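(* Let $C$ be a transcendental kernel configuration, $(\mathcal M,\theta)\models T_\theta^C$, and $f\in K[X]_{\mathrm{irr}}$ with $C(f)<\infty$. For every $v\in\mathrm{Im}(f^{C(f)}[\theta])\setminus\mathrm{Im}(f^{C(f)+1}[\theta])$ there is an extension $(\mathcal M',\theta')\supseteq(\mathcal M,\theta)$ with $(\mathcal M',\theta')\models T_\theta^C$ and $v\in\mathrm{Im}(f^{C(f)+1}[\theta'])$.
   Context: Setting: $L$ is a first-order language, $T$ a model-complete $L$-theory and $K$ a field. There are $L$-formulas without parameters which define, in every model $\mathcal M\models T$, a nontrivial $K$-vector space $\mathbb V=\mathbb V^{\mathcal M}$; elements of $\mathbb V$ are treated as single elements. $L_\theta=L\cup\{\theta\}$, $\theta$ a new unary function symbol; $T_\theta$ is $T$ plus axioms saying $\theta|_{\mathbb V}$ is a $K$-linear endomorphism of $\mathbb V$ and $\theta(x)=0$ for $x\notin\mathbb V$. For $\rho=\sum_i(\rho)_iX^i\in K[X]$, $\rho[\theta]:=\sum_i(\rho)_i\theta^i$; images and kernels are taken in $\mathbb V$. $K[X]_{\mathrm{irr}}$ is the set of monic irreducible polynomials. A kernel configuration is a pair $C=(c,d)$ with $c:K[X]_{\mathrm{irr}}\to\mathbb N\cup\{\infty\}$, $d\in\mathbb N_{>0}\cup\{\infty\}$ such that $d=\infty$ or $d=\sum_f\deg(f)c(f)$; write $C(f)=c(f)$; $C$ is transcendental if $d=\infty$. For transcendental $C$, $\theta$ is a $C$-endomorphism if $\mathrm{Ker}(f^{C(f)}[\theta])=\mathrm{Ker}(f^{C(f)+1}[\theta])$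 for all $f$ with $C(f)<\infty$, and $T^C_\theta:=T_\theta\cup\{\theta|_{\mathbb V}\text{ is a }C\text{-endomorphism}\}$. *)

(* Defs.v *)
From mathcomp Require Import all_boot all_algebra.
Set Implicit Arguments. Unset Strict Implicit. Unset Printing Implicit Defensive.
Import GRing.Theory.
Local Open Scope ring_scope.

Record signature := Signature {
  fsym : Type; fun_ar : fsym -> nat;
  rsym : Type; rel_ar : rsym -> nat }.

Section FOL.
Variable S : signature.

Inductive term :=
  | tvar : nat -> term
  | tapp (f : fsym S) : ('I_(fun_ar f) -> term) -> term.

(* de Bruijn variables: Fall / Fex bind variable 0 *)
Inductive formula :=
  | Fbot : formula
  | Feq : term -> term -> formula
  | Frel (r : rsym S) : ('I_(rel_ar r) -> term) -> formula
  | Fnot : formula -> formula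
  | Fand : formula -> formula -> formula
  | For : formula -> formula -> formula
  | Fimp : formula -> formula -> formula
  | Fall : formula -> formula
  | Fex : formula -> formula.

Record structure := Structure {
  dom :> Type;
  ifun : forall f : fsym S, ('I_(fun_ar f) -> dom) -> dom;
  irel : forall r : rsym S, ('I_(rel_ar r) -> dom) -> Prop }.

Definition scons (D : Type) (x : D) (env : nat -> D) : nat -> D :=
  fun n => match n with 0 => x | n'.+1 => env n' end.

Fixpoint teval (M : structure) (env : nat -> M) (t : term) : M :=
  match t with
  | tvar n => env n
  | tapp f args => @ifun M f (fun i => teval env (args i))
  end.

Fixpoint sat (M : structure) (env : nat -> M) (phi : formula) : Prop :=
  match phi with
  | Fbot => False
  | Feq t u => teval env t = teval env u
  | Frel r args => @irel M r (fun i => teval env (args i))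
  | Fnot p => ~ sat env p
  | Fand p q => sat env p /\ sat env q
  | For p q => sat env p \/ sat env q
  | Fimp p q => sat env p -> sat env q
  | Fall p => forall x : M, sat (scons x env) p
  | Fex p => exists x : M, sat (scons x env) p
  end.

Definition theory := formula -> Prop.
Definition model (T : theory) (M : structure) : Prop :=
  forall phi, T phi -> forall env : nat -> M, sat env phi.

(* L-embeddings (extensions up to identification of M with its image). *)
Definition embedding (M N : structure) (e : M -> N) : Prop :=
  [/\ injective e,
      (forall f args, e (@ifun M f args) = @ifun N f (fun i => e (args i))) &
      (forall r args, @irel M r args <-> @irel N r (fun i => e (args i)))].

Definition elementary (M N : structure) (e : M -> N) : Prop :=
  forall phi (env : nat -> M), sat env phi <-> sat (fun n => e (env n)) phi.

Definition model_complete (T : theory) : Prop :=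
  forall (M N : structure) (e : M -> N),
    model T M -> model T N -> embedding e -> elementary e.

End FOL.

Section DefVS.
Variable S : signature.
Variable K : fieldType.

(* Parameter-free formulas: fV (free var 0) defines the underlying set of V,
   fAdd (free vars 0,1,2) the graph of addition, fSmul c (free vars 0,1)
   the graph of scalar multiplication by c. *)
Record vs_formulas := VSFormulas {
  fV : formula S; fAdd : formula S; fSmul : K -> formula S }.

Variable D : vs_formulas.

Definition env1 (M : structure S) (x : M) : nat -> M := fun _ => x.
Definition env2 (M : structure S) (x y : M) : nat -> M := scons x (env1 y).
Definition env3 (M : structure S) (x y z : M) : nat -> M :=
  scons x (scons y (env1 z)).

Definition inV (M : structure S) (x : M) : Prop := sat (env1 x) (fV D).
Definition addR (M : structure S) (x y z : M) : Prop := sat (env3 x y z) (fAdd D).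
Definition smulR (M : structure S) (c : K) (x y : M) : Prop :=
  sat (env2 x y) (fSmul D c).

Definition defines_vs (M : structure S) : Prop :=
  exists (W : lmodType K) (i : W -> M),
    [/\ injective i,
        (forall x, inV x <-> exists w, x = i w),
        (forall x y z, addR x y z <->
             exists a b, [/\ x = i a, y = i b & z = i (a + b)]),
        (forall c x y, smulR c x y <-> exists a, x = i a /\ y = i (c *: a)) &
        exists w : W, w != 0].

Definition defines_vs_in (T : theory S) : Prop :=
  forall M : structure S, model T M -> defines_vs M.

Definition isZeroV (M : structure S) (z : M) : Prop :=
  inV z /\ forall x, inV x -> addR x z x.

(* (M, theta) |= T_theta (besides M |= T): theta|V is a K-linear endomorphism
   of V and theta x = 0 for x outside V. *)
Definition lin_endo (M : structure S) (theta : M -> M) : Prop :=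
  [/\ (forall x, inV x -> inV (theta x)),
      (forall x, ~ inV x -> isZeroV (theta x)),
      (forall x y z, addR x y z -> addR (theta x) (theta y) (theta z)) &
      (forall c x y, smulR c x y -> smulR c (theta x) (theta y))].

Definition model_Ttheta (T : theory S) (M : structure S) (theta : M -> M) :=
  model T M /\ lin_endo theta.

(* rho[theta] w = v, computed by Horner's scheme on the coefficient list
   (lowest degree first): (c + X q)[theta] w = c w + theta (q[theta] w). *)
Fixpoint pevalR (M : structure S) (theta : M -> M) (s : seq K) (w v : M)
  : Prop :=
  match s with
  | [::] => isZeroV v
  | c :: s' => exists u a, [/\ pevalR theta s' w u, smulR c w a &
                                addR a (theta u) v]
  end.

Definition polyAt (M : structure S) (theta : M -> M) (rho : {poly K}) (w v : M)
  : Prop := pevalR theta (polyseq rho) w v.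

Definition inIm (M : structure S) (theta : M -> M) (rho : {poly K}) (v : M)
  : Prop := exists w, inV w /\ polyAt theta rho w v.
Definition inKer (M : structure S) (theta : M -> M) (rho : {poly K}) (w : M)
  : Prop := inV w /\ exists z, polyAt theta rho w z /\ isZeroV z.

End DefVS.

Definition monic_irr (K : fieldType) (f : {poly K}) : Prop :=
  f \is monic /\ irreducible_poly f.

(* C = (c, d); None encodes infinity.  If d is finite, then
   d = sum_f deg(f) c(f), i.e. c is finite everywhere, has finite support
   on monic irreducibles, and the (finite) sum equals d. *)
Record kconf (K : fieldType) := KConf {
  kc : {poly K} -> option nat;
  kd : option nat;
  kd_pos : forall n, kd = Some n -> (0 < n)%N;
  kd_sum : forall n, kd = Some n ->
    exists s : seq {poly K},
      [/\ uniq s, (forall f, f \in s -> monic_irr f),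
          (forall f, monic_irr f -> f \notin s -> kc f = Some 0%N),
          (forall f, f \in s -> kc f <> None) &
          n = (\sum_(f <- s) (size f).-1 * odflt 0%N (kc f))%N] }.

Definition transcendental (K : fieldType) (C : kconf K) : Prop := kd C = None.

Section CEndo.
Variables (S : signature) (K : fieldType) (D : vs_formulas S K).

Definition C_endo (C : kconf K) (M : structure S) (theta : M -> M) : Prop :=
  forall (f : {poly K}) (n : nat), monic_irr f -> kc C f = Some n ->
    forall w : M, inKer D theta (f ^+ n) w <-> inKer D theta (f ^+ n.+1) w.

Definition model_TthetaC (T : theory S) (C : kconf K) (M : structure S)
  (theta : M -> M) : Prop :=
  model_Ttheta D T theta /\ C_endo C theta.

End CEndo.

(* Main.v *)
Require Import Defs.
From mathcomp Require Import all_boot all_algebra.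
From mathcomp Require Import boolp classical_sets filter.
Set Implicit Arguments. Unset Strict Implicit. Unset Printing Implicit Defensive.

Import GRing.Theory.

Record ultra := Ultra {
  U : (nat -> Prop) -> Prop;
  uT : U (fun _ => True);
  uI : forall A B : nat -> Prop, U A -> U B -> U (fun k => A k /\ B k);
  uS : forall A B : nat -> Prop, (forall k, A k -> B k) -> U A -> U B;
  u0 : ~ U (fun _ => False);
  uC : forall A : nat -> Prop, U A \/ U (fun k => ~ A k);
  ucof : forall m, U (fun k => (m <= k)%N) }.

Lemma ultra_exists : exists u : ultra, True.
Proof.
have [G [UG sub]] := ultraFilterLemma (@eventually_filter).
have GF : ProperFilter G by case: UG.
have hT : G (fun _ => True) by exact: (@filterT _ G).
unshelve eexists; last done.
apply: (@Ultra G).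
- exact: hT.
- by move=> A B hA hB; exact: (@filterI _ G _ A B hA hB).
- by move=> A B hAB hA; apply: (@filterS _ G _ A B) => //.
- move=> h; apply: (@filter_not_empty _ G GF).
  by have -> : (set0 : set nat) = (fun _ => False) by rewrite predeqE.
- move=> A; case: (in_ultra_setVsetC A UG) => h; [by left|right; exact: h].
- move=> m; apply: sub; exists m => //.
Qed.

Section UltraLemmas.
Variable u : ultra.
Local Notation U := (U u).

Lemma U_ex A : U A -> exists k, A k.
Proof.
move=> h; apply: contrapT => nA; apply: (u0 (u:=u)).
apply: uS h => k Ak; apply: nA; by exists k.
Qed.

Lemma U_seq (I : eqType) (s : seq I) (A : I -> nat -> Prop) :
  (forall i, i \in s -> U (A i)) -> U (fun k => forall i, i \in s -> A i k).
Proof.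
elim: s => [|x s IH] h.
  by apply: uS (uT u) => k _ i.
have hx := h x (mem_head _ _).
have hs : U (fun k => forall i, i \in s -> A i k).
  by apply: IH => i hi; apply: h; rewrite in_cons hi orbT.
apply: uS (uI hx hs) => k [hxk hsk] i; rewrite in_cons => /orP [/eqP -> //|]; exact: hsk.
Qed.

Lemma U_fin (n : nat) (A : 'I_n -> nat -> Prop) :
  (forall i, U (A i)) -> U (fun k => forall i, A i k).
Proof.
move=> h; have := @U_seq _ (enum 'I_n) A (fun i _ => h i).
by apply: uS => k hk i; apply: hk; rewrite mem_enum.
Qed.

Lemma U_two A : U A -> exists k1 k2, [/\ A k1, A k2 & (k1 < k2)%N].
Proof.
move=> hA; have [k1 hk1] := U_ex hA.
have [k2 [hk2 hle]] := U_ex (uI hA (ucof u k1.+1)).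
by exists k1, k2.
Qed.

Lemma U_neg A : ~ U A <-> U (fun k => ~ A k).
Proof.
split; first by move=> h; case: (uC u A).
move=> h hA; have [k [] ] := U_ex (uI hA h); tauto.
Qed.

End UltraLemmas.

Section Ultrapower.
Variables (S : signature) (u : ultra) (M : structure S).
Local Notation U := (U u).

Definition ueq (x y : nat -> M) := U (fun k => x k = y k).

Lemma ueq_refl x : ueq x x.
Proof. by apply: uS (uT u). Qed.
Lemma ueq_sym x y : ueq x y -> ueq y x.
Proof. by apply: uS. Qed.
Lemma ueq_trans x y z : ueq x y -> ueq y z -> ueq x z.
Proof. move=> h1 h2; apply: uS (uI h1 h2) => k [-> ->] //. Qed.

Definition canon (x : nat -> M) : nat -> M :=
  sval (@cid _ (fun z => ueq z x) (ex_intro (fun z => ueq z x) x (ueq_refl x))).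

Lemma canonP x : ueq (canon x) x.
Proof. rewrite /canon; case: cid => //. Qed.

Lemma canon_eq x y : ueq x y -> canon x = canon y.
Proof.
move=> hxy.
have E : (fun z => ueq z x) = (fun z => ueq z y).
  apply: funext => z; apply: propext; split => h.
    exact: ueq_trans h hxy.
  exact: ueq_trans h (ueq_sym hxy).
rewrite /canon.
move: (ex_intro (fun z => ueq z x) x (ueq_refl x)) (ex_intro (fun z => ueq z y) y (ueq_refl y)).
rewrite E => h1 h2; by rewrite (Prop_irrelevance h1 h2).
Qed.

Lemma canon_idem x : canon (canon x) = canon x.
Proof. apply: canon_eq; exact: canonP. Qed.

Definition UP := {x : nat -> M | canon x = x}.
Definition cl (x : nat -> M) : UP := exist _ (canon x) (canon_idem x).

Lemma cl_val (a : UP) : cl (sval a) = a.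
Proof. case: a => x hx; apply: eq_exist => /=; exact: hx. Qed.

Lemma cl_eq x y : cl x = cl y <-> ueq x y.
Proof.
split.
  move=> h; have : canon x = canon y by move: (f_equal sval h).
  move=> e; apply: ueq_trans (ueq_sym (canonP x)) _; rewrite e; exact: canonP.
move=> h; apply: eq_exist; exact: canon_eq.
Qed.

Lemma val_cl x : ueq (sval (cl x)) x.
Proof. exact: canonP. Qed.

Definition UPs : structure S :=
  {| dom := UP;
     ifun := fun f args => cl (fun k => ifun (fun i => sval (args i) k));
     irel := fun r args => U (fun k => irel (fun i => sval (args i) k)) |}.

Definition envk (env : nat -> UPs) (k : nat) : nat -> M := fun n => sval (env n) k.

Lemma teval_los (env : nat -> UPs) (t : term S) :
  teval env t = cl (fun k => teval (envk env k) t).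
Proof.
elim: t => [n|f args IH] /=.
  by rewrite -[env n]cl_val.
apply/cl_eq.
have h : U (fun k => forall i, sval (teval env (args i)) k = teval (envk env k) (args i)).
  apply: U_fin => i; rewrite IH; exact: val_cl.
apply: uS h => k hk; congr ifun; apply: funext => i; exact: hk.
Qed.

Lemma los (phi : formula S) : forall env : nat -> UPs,
  sat env phi <-> U (fun k => sat (envk env k) phi).
Proof.
elim: phi => [|t1 t2|r args|p IH|p IHp q IHq|p IHp q IHq|p IHp q IHq|p IH|p IH] env /=.
- split => // h; exact: u0 (uS (fun k (x : False) => x) h).
- rewrite !teval_los cl_eq /ueq; split; apply: uS => k; by rewrite /=.
- have h : U (fun k => forall i, sval (teval env (args i)) k = teval (envk env k) (args i)).
    apply: U_fin => i; rewrite teval_los; exact: val_cl.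
  have E : forall k, (forall i, sval (teval env (args i)) k = teval (envk env k) (args i)) ->
     (fun i => sval (teval env (args i)) k) = (fun i => teval (envk env k) (args i)).
    by move=> k hk; apply: funext => i; rewrite hk.
  split => hh.
    by apply: uS (uI h hh) => k [e1 e2]; rewrite -(E k e1).
  by apply: uS (uI h hh) => k [e1 e2]; rewrite (E k e1).
- rewrite IH; exact: U_neg.
- rewrite IHp IHq; split; first by case=> h1 h2; exact: uI h1 h2.
  move=> h; split; apply: uS h => k []//.
- rewrite IHp IHq; split.
    by case=> h; apply: uS h => k; [left|right].
  move=> h; case: (uC u (fun k => sat (envk env k) p)) => hp; first by left.
  right; apply: uS (uI h hp) => k [[]]//.
- rewrite IHp IHq; split.
    move=> h; case: (uC u (fun k => sat (envk env k) p)) => hp.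
      by apply: uS (h hp) => k hq _.
    by apply: uS hp => k hnp hp; case: (hnp hp).
  move=> h hp; apply: uS (uI h hp) => k [hi hpk]; exact: hi hpk.
- have E : forall (x : UPs) k, envk (scons x env) k = scons (sval x k) (envk env k).
    move=> x k; apply: funext => -[|n] //.
  split.
    move=> h; apply: contrapT => /U_neg hn.
    pose xs k := match pselect (exists m, ~ sat (scons m (envk env k)) p) with
                 | left e => sval (cid e) | right _ => envk env k 0 end.
    have := h (cl xs); rewrite IH => hh.
    have [k [[hk1 hk2] hk3]] := U_ex (uI (uI hh hn) (val_cl xs)).
    apply: hk2 => m.
    rewrite E hk3 /xs in hk1; move: hk1.
    case: pselect => [e|ne]; first by case: cid => /= y hy /hy.
    by move=> _; apply: contrapT => hm; apply: ne; exists m.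
  move=> h x; rewrite IH; apply: uS h => k hk; rewrite E; exact: hk.
- have E : forall (x : UPs) k, envk (scons x env) k = scons (sval x k) (envk env k).
    move=> x k; apply: funext => -[|n] //.
  split.
    by case=> x; rewrite IH; apply: uS => k hk; exists (sval x k); rewrite -E.
  move=> h.
  pose xs k := match pselect (exists m, sat (scons m (envk env k)) p) with
               | left e => sval (cid e) | right _ => envk env k 0 end.
  exists (cl xs); rewrite IH; apply: uS (uI h (val_cl xs)) => k [hk1 hk2].
  rewrite E hk2 /xs; case: pselect => [e|ne]; first by case: cid.
  by case: (ne hk1).
Qed.

End Ultrapower.

Section UPfacts.
Variables (S : signature) (u : ultra) (M : structure S).
Local Notation U := (U u).
Local Notation UPs := (UPs u M).
Local Notation cl x := (@cl S u M x : UPs).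

Definition diag (x : M) : UPs := cl (fun _ => x).

Lemma diag_embedding : embedding diag.
Proof.
split.
- move=> x y /cl_eq h; have [k] := U_ex h; done.
- move=> f args; apply/cl_eq => /=.
  have h : U (fun k => forall i, sval (diag (args i)) k = args i).
    apply: U_fin => i; exact: (val_cl u (fun _ => args i)).
  apply: uS h => k hk; congr ifun; apply: funext => i; symmetry; exact: hk i.
- move=> r args /=.
  have h : U (fun k => forall i, sval (diag (args i)) k = args i).
    apply: U_fin => i; exact: (val_cl u (fun _ => args i)).
  have E : forall k, (forall i, sval (diag (args i)) k = args i) ->
     (fun i => sval (diag (args i)) k) = args by move=> k hk; apply: funext.
  split.
    by move=> hr; apply: uS h => k hk; rewrite (E k hk).
  move=> hh; have [k [hk1 hk2]] := U_ex (uI h hh); by rewrite (E k hk1) in hk2.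
Qed.

Lemma model_UP (T : theory S) : model T M -> model T UPs.
Proof.
move=> hM phi hphi env; apply/los; apply: uS (uT u) => k _; exact: hM.
Qed.

Lemma los1 (phi : formula S) (a : nat -> M) :
  sat (env1 (cl a)) phi <-> U (fun k => sat (env1 (a k)) phi).
Proof.
rewrite los; have h := val_cl u a.
split => hh; apply: uS (uI h hh) => k [e1 e2].
  by have <- : envk (env1 (cl a)) k = env1 (a k) by apply: funext => n; rewrite /envk /env1 e1.
by have -> : envk (env1 (cl a)) k = env1 (a k) by apply: funext => n; rewrite /envk /env1 e1.
Qed.

Lemma los2 (phi : formula S) (a b : nat -> M) :
  sat (env2 (cl a) (cl b)) phi <-> U (fun k => sat (env2 (a k) (b k)) phi).
Proof.
rewrite los; have h := uI (val_cl u a) (val_cl u b).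
have E : forall k, sval (cl a) k = a k /\ sval (cl b) k = b k ->
   envk (env2 (cl a) (cl b)) k = env2 (a k) (b k).
  by move=> k [e1 e2]; apply: funext => -[|n]; rewrite /envk /env2 /env1 /= ?e1 ?e2.
split => hh; apply: uS (uI h hh) => k [e1 e2]; by rewrite ?(E k e1) // -(E k e1).
Qed.

Lemma los3 (phi : formula S) (a b c : nat -> M) :
  sat (env3 (cl a) (cl b) (cl c)) phi <-> U (fun k => sat (env3 (a k) (b k) (c k)) phi).
Proof.
rewrite los; have h := uI (uI (val_cl u a) (val_cl u b)) (val_cl u c).
have E : forall k, (sval (cl a) k = a k /\ sval (cl b) k = b k) /\ sval (cl c) k = c k ->
   envk (env3 (cl a) (cl b) (cl c)) k = env3 (a k) (b k) (c k).
  by move=> k [[e1 e2] e3]; apply: funext => -[|[|n]]; rewrite /envk /env3 /env1 /= ?e1 ?e2 ?e3.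
split => hh; apply: uS (uI h hh) => k [e1 e2]; by rewrite ?(E k e1) // -(E k e1).
Qed.

End UPfacts.

Import GRing.Theory.
Local Open Scope ring_scope.

Section PE.
Variables (K : fieldType) (W : lmodType K) (g : W -> W).

Fixpoint pevs (s : seq K) (w : W) : W :=
  match s with [::] => 0 | c :: s' => c *: w + g (pevs s' w) end.

Definition pe (p : {poly K}) (w : W) : W := \sum_(i < size p) p`_i *: iter i g w.

Lemma pe_wide (n : nat) (p : {poly K}) (w : W) : (size p <= n)%N ->
  pe p w = \sum_(i < n) p`_i *: iter i g w.
Proof.
move=> hn; rewrite /pe (big_ord_widen _ (fun i => p`_i *: iter i g w) hn) big_mkcond /=.
apply: eq_bigr => i _; case: ifP => // /negbT; rewrite -leqNgt => hi.
by rewrite nth_default // scale0r.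
Qed.

Lemma peD (p q : {poly K}) (w : W) : pe (p + q) w = pe p w + pe q w.
Proof.
rewrite (pe_wide _ (size_polyD p q)) (pe_wide _ (leq_maxl (size p) (size q))).
rewrite (pe_wide _ (leq_maxr (size p) (size q))) -big_split /=.
by apply: eq_bigr => i _; rewrite coefD scalerDl.
Qed.

Lemma peZ (c : K) (p : {poly K}) (w : W) : pe (c *: p) w = c *: pe p w.
Proof.
rewrite (pe_wide _ (size_scale_leq c p)) /pe scaler_sumr.
by apply: eq_bigr => i _; rewrite coefZ scalerA.
Qed.

Lemma pe0 (w : W) : pe 0 w = 0.
Proof. by rewrite /pe size_poly0 big_ord0. Qed.

Lemma peN (p : {poly K}) (w : W) : pe (- p) w = - pe p w.
Proof. have -> : - p = (-1 : K) *: p by rewrite scaleN1r. by rewrite peZ scaleN1r. Qed.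

Lemma peB (p q : {poly K}) (w : W) : pe (p - q) w = pe p w - pe q w.
Proof. by rewrite peD peN. Qed.

Lemma peC (c : K) (w : W) : pe c%:P w = c *: w.
Proof. by rewrite (pe_wide _ (size_polyC_leq1 c)) big_ord1 /= coefC. Qed.

Lemma pe1 (w : W) : pe 1 w = w.
Proof. by rewrite -[1]/(1%:P) peC scale1r. Qed.

Lemma pe_mulX (p : {poly K}) (w : W) : pe (p * 'X) w = pe p (g w).
Proof.
have hs : (size (p * 'X)%R <= (size p).+1)%N.
  have [->|pn0] := eqVneq p 0; first by rewrite mul0r size_poly0.
  by rewrite size_mulX.
rewrite (pe_wide _ hs) big_ord_recl /= coefMX eqxx scale0r add0r /pe.
by apply: eq_bigr => i _; rewrite coefMX /= add0n -iterS iterSr.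
Qed.

Hypotheses (gD : forall a b, g (a + b) = g a + g b)
           (gZ : forall (c : K) a, g (c *: a) = c *: g a).

Lemma g0 : g 0 = 0.
Proof. by have := gZ 0 0; rewrite !scale0r. Qed.

Lemma g_sum (I : Type) (r : seq I) (P : pred I) (F : I -> W) :
  g (\sum_(i <- r | P i) F i) = \sum_(i <- r | P i) g (F i).
Proof.
elim/big_rec2: _ => [|i y1 y2 _ <-]; first exact: g0.
by rewrite gD.
Qed.

Lemma iterD n (a b : W) : iter n g (a + b) = iter n g a + iter n g b.
Proof. by elim: n => //= n ->; rewrite gD. Qed.
Lemma iterZ n (c : K) (a : W) : iter n g (c *: a) = c *: iter n g a.
Proof. by elim: n => //= n ->; rewrite gZ. Qed.

Lemma pe_wD (p : {poly K}) (a b : W) : pe p (a + b) = pe p a + pe p b.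
Proof. by rewrite /pe -big_split; apply: eq_bigr => i _; rewrite iterD scalerDr. Qed.
Lemma pe_wZ (p : {poly K}) (c : K) (a : W) : pe p (c *: a) = c *: pe p a.
Proof. by rewrite /pe scaler_sumr; apply: eq_bigr => i _; rewrite iterZ !scalerA mulrC. Qed.
Lemma pe_w0 (p : {poly K}) : pe p 0 = 0.
Proof. by have := pe_wZ p 0 0; rewrite !scale0r. Qed.
Lemma pe_wN (p : {poly K}) (a : W) : pe p (- a) = - pe p a.
Proof. by rewrite -scaleN1r pe_wZ scaleN1r. Qed.
Lemma pe_wB (p : {poly K}) (a b : W) : pe p (a - b) = pe p a - pe p b.
Proof. by rewrite pe_wD pe_wN. Qed.

Lemma pe_comm (p : {poly K}) (w : W) : pe p (g w) = g (pe p w).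
Proof.
rewrite /pe g_sum; apply: eq_bigr => i _; by rewrite gZ -iterSr iterS.
Qed.

Lemma pe_X (w : W) : pe 'X w = g w.
Proof. by rewrite -['X]mul1r pe_mulX pe1. Qed.

Lemma pe_mul (p q : {poly K}) (w : W) : pe (p * q) w = pe p (pe q w).
Proof.
elim/poly_ind: q w => [|q c IH] w; first by rewrite mulr0 !pe0 pe_w0.
by rewrite mulrDr mulrA peD pe_mulX IH [p * _%:P]mulrC mul_polyC peZ peD pe_mulX peC pe_wD pe_wZ.
Qed.

Lemma pe_exp (p : {poly K}) m (w : W) : pe (p ^+ m) w = iter m (pe p) w.
Proof. elim: m => [|m IH] /=; first by rewrite expr0 pe1. by rewrite exprS pe_mul IH. Qed.

Lemma pevs_sum (s : seq K) (w : W) : pevs s w = \sum_(i < size s) s`_i *: iter i g w.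
Proof.
elim: s => [|c s IH] /=; first by rewrite big_ord0.
rewrite big_ord_recl /= IH g_sum; congr (_ + _).
by apply: eq_bigr => i _; rewrite gZ.
Qed.

Lemma pevs_pe (p : {poly K}) (w : W) : pevs p w = pe p w.
Proof. by rewrite pevs_sum. Qed.

End PE.

Import GRing.Theory.
Local Open Scope ring_scope.

Section Bridge.
Variables (S : signature) (K : fieldType) (D : vs_formulas S K) (N : structure S)
  (W : lmodType K) (i : W -> N).
Hypotheses (Hi : injective i) (HV : forall x, inV D x <-> exists w, x = i w)
  (HA : forall x y z, addR D x y z <-> exists a b, [/\ x = i a, y = i b & z = i (a + b)])
  (HS : forall c x y, smulR D c x y <-> exists a, x = i a /\ y = i (c *: a)).

Lemma isZeroV_iff z : isZeroV D z <-> z = i 0.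
Proof.
split.
  move=> [/HV [a ->] h]; have /HA [a' [b' [e1 e2 e3]]] := h (i 0) (proj2 (HV _) (ex_intro _ 0 erefl)).
  move/Hi: e1 => e1; move/Hi: e2 => e2; move/Hi: e3 => e3; subst.
  by rewrite add0r in e3; rewrite -e3.
move=> ->; split; first by apply/HV; exists 0.
move=> x /HV [b ->]; apply/HA; exists b, 0; by rewrite addr0.
Qed.

Variables (theta : N -> N) (g : W -> W).
Hypotheses (hth : forall w, theta (i w) = i (g w))
  (gD : forall a b, g (a + b) = g a + g b) (gZ : forall c a, g (c *: a) = c *: g a).

Lemma pevalR_iff s w z : pevalR D theta s (i w) z <-> z = i (pevs g s w).
Proof.
elim: s z => [|c s IH] z /=; first exact: isZeroV_iff.
split.
  move=> [v [a [/IH -> /HS [a0 [/Hi <- ->]] /HA [a1 [b1 [/Hi <- e2 ->]]]]]].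
  by move: e2; rewrite hth => /Hi <-.
move=> ->; exists (i (pevs g s w)), (i (c *: w)); split.
- exact/IH.
- by apply/HS; exists w.
- by apply/HA; exists (c *: w), (g (pevs g s w)); rewrite hth; split.
Qed.

Lemma polyAt_iff p w z : polyAt D theta p (i w) z <-> z = i (pe g p w).
Proof. rewrite /polyAt -(pevs_pe gD gZ); exact: pevalR_iff. Qed.

Lemma inIm_iff p y : inIm D theta p y <-> exists w, y = i (pe g p w).
Proof.
split.
  by move=> [x [/HV [w ->] /polyAt_iff ->]]; exists w.
move=> [w ->]; exists (i w); split; first by apply/HV; exists w.
exact/polyAt_iff.
Qed.

Lemma inKer_iff p y : inKer D theta p y <-> exists w, y = i w /\ pe g p w = 0.
Proof.
split.
  move=> [/HV [w ->] [z [/polyAt_iff -> /isZeroV_iff /Hi h]]]; by exists w.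
move=> [w [-> h]]; split; first by apply/HV; exists w.
exists (i (pe g p w)); split; first exact/polyAt_iff.
by apply/isZeroV_iff; rewrite h.
Qed.

End Bridge.

Section Build.
Variables (S : signature) (K : fieldType) (D : vs_formulas S K) (N : structure S)
  (W : lmodType K) (i : W -> N).
Hypotheses (Hi : injective i) (HV : forall x, inV D x <-> exists w, x = i w)
  (HA : forall x y z, addR D x y z <-> exists a b, [/\ x = i a, y = i b & z = i (a + b)])
  (HS : forall c x y, smulR D c x y <-> exists a, x = i a /\ y = i (c *: a)).

Lemma g_of_theta (theta : N -> N) : lin_endo D theta ->
  exists g : W -> W, [/\ (forall w, theta (i w) = i (g w)),
     (forall a b, g (a + b) = g a + g b),
     (forall c a, g (c *: a) = c *: g a) &
     (forall x, ~ inV D x -> theta x = i 0)].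
Proof.
move=> [h1 h2 h3 h4].
have ex : forall w, exists w', theta (i w) = i w'.
  by move=> w; apply/HV; apply: h1; apply/HV; exists w.
pose g w := sval (cid (ex w)).
have hg : forall w, theta (i w) = i (g w) by move=> w; rewrite /g; case: cid.
exists g; split => //.
- move=> a b; have : addR D (i a) (i b) (i (a + b)) by apply/HA; exists a, b.
  move/h3; rewrite !hg => /HA [a1 [b1 [/Hi <- /Hi <- /Hi ->]]] //.
- move=> c a; have : smulR D c (i a) (i (c *: a)) by apply/HS; exists a.
  move/h4; rewrite !hg => /HS [a1 [/Hi <- /Hi ->]] //.
- by move=> x /h2 /(isZeroV_iff Hi HV HA).
Qed.

Variables (g : W -> W).
Hypotheses (gD : forall a b, g (a + b) = g a + g b) (gZ : forall c a, g (c *: a) = c *: g a).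

Definition thetaOf (x : N) : N :=
  match pselect (exists w, x = i w) with
  | left h => i (g (sval (cid h)))
  | right _ => i 0 end.

Lemma thetaOf_i w : thetaOf (i w) = i (g w).
Proof.
rewrite /thetaOf; case: pselect => [h|nh]; last by case: nh; exists w.
by case: cid => /= w' /Hi <-.
Qed.

Lemma thetaOf_out x : ~ inV D x -> thetaOf x = i 0.
Proof.
move=> hx; rewrite /thetaOf; case: pselect => // h; case: hx; exact/HV.
Qed.

Lemma thetaOf_lin : lin_endo D thetaOf.
Proof.
split.
- by move=> x /HV [w ->]; rewrite thetaOf_i; apply/HV; exists (g w).
- by move=> x hx; rewrite thetaOf_out //; apply/(isZeroV_iff Hi HV HA).
- move=> x y z /HA [a [b [-> -> ->]]]; rewrite !thetaOf_i; apply/HA.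
  by exists (g a), (g b); rewrite gD.
- move=> c x y /HS [a [-> ->]]; rewrite !thetaOf_i; apply/HS.
  by exists (g a); rewrite gZ.
Qed.

End Build.

Import GRing.Theory.
Local Open Scope ring_scope.

Section Indep.
Variables (K : fieldType) (W : lmodType K) (phi : W -> W).
Hypotheses (pD : forall a b, phi (a + b) = phi a + phi b)
  (pZ : forall (c : K) a, phi (c *: a) = c *: phi a).
Variables (m : nat) (u0 w0 : W).
Hypotheses (hw0 : w0 = iter m phi u0) (hnot : ~ exists y, w0 = iter m.+1 phi y)
  (hker : forall w, iter m.+1 phi w = 0 -> iter m phi w = 0).

Lemma pe_iter (p : {poly K}) k w : pe phi p (iter k phi w) = iter k phi (pe phi p w).
Proof. elim: k => //= k IH; by rewrite pe_comm // IH. Qed.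

Lemma orbit_indep (Q : {poly K}) : pe phi Q w0 = 0 -> Q = 0.
Proof.
elim/poly_ind: Q => [//|R c IH].
rewrite peD pe_mulX peC pe_comm // => h.
have hR : pe phi R w0 = iter m phi (pe phi R u0) by rewrite hw0 pe_iter.
have [c0|cn0] := eqVneq c 0.
  move: h; rewrite c0 scale0r addr0 hR => h.
  have h2 : iter m phi (pe phi R u0) = 0 by apply: hker; rewrite iterS.
  by rewrite (IH _) ?mul0r ?add0r ?c0 // hR.
exfalso; apply: hnot; exists (- c^-1 *: pe phi R u0).
rewrite iterZ //= -hR.
apply: (scalerI cn0); rewrite scalerA mulrN mulfV // scaleN1r.
by apply/eqP; rewrite -addr_eq0 addrC h.
Qed.

End Indep.

Section ModUP.
Variables (u : ultra) (K : fieldType) (W W' : lmodType K) (G : (nat -> W) -> W').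
Hypotheses (GD : forall x y, G (fun k => x k + y k) = G x + G y)
  (GZ : forall (c : K) x, G (fun k => c *: x k) = c *: G x)
  (Gsurj : forall w', exists x, w' = G x)
  (G0 : forall x, G x = 0 <-> U u (fun k => x k = 0)).

Lemma GB x y : G (fun k => x k - y k) = G x - G y.
Proof.
have -> : (fun k => x k - y k) = (fun k => x k + (-1 : K) *: y k).
  by apply: funext => k; rewrite scaleN1r.
by rewrite GD GZ scaleN1r.
Qed.

Lemma Geq x y : G x = G y <-> U u (fun k => x k = y k).
Proof.
split => h.
  have : G (fun k => x k - y k) = 0 by rewrite GB h subrr.
  by move/G0; apply: uS => k /eqP; rewrite subr_eq0 => /eqP.
apply/eqP; rewrite -subr_eq0 -GB; apply/eqP/G0; apply: uS h => k ->; exact: subrr.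
Qed.

Definition iotaU (w : W) : W' := G (fun _ => w).

Lemma iotaU_inj : injective iotaU.
Proof. by move=> a b /Geq /U_ex [k]. Qed.

Variables (g : W -> W).
Hypotheses (gD : forall a b, g (a + b) = g a + g b)
  (gZ : forall (c : K) a, g (c *: a) = c *: g a).

Definition gU (w' : W') : W' := G (fun k => g (sval (cid (Gsurj w')) k)).

Lemma gU_G x : gU (G x) = G (fun k => g (x k)).
Proof.
rewrite /gU; case: cid => /= y /esym /Geq h; apply/Geq; by apply: uS h => k ->.
Qed.

Lemma gUD a b : gU (a + b) = gU a + gU b.
Proof.
have [x ->] := Gsurj a; have [y ->] := Gsurj b.
by rewrite -GD !gU_G -GD; congr G; apply: funext => k; rewrite gD.
Qed.

Lemma gUZ (c : K) a : gU (c *: a) = c *: gU a.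
Proof.
have [x ->] := Gsurj a; by rewrite -GZ !gU_G -GZ; congr G; apply: funext => k; rewrite gZ.
Qed.

Lemma gU_iota w : gU (iotaU w) = iotaU (g w).
Proof. by rewrite /iotaU gU_G. Qed.

Lemma pe_gU (p : {poly K}) x : pe gU p (G x) = G (fun k => pe g p (x k)).
Proof.
elim/poly_ind: p x => [|p c IH] x.
  rewrite pe0; symmetry; apply/G0; apply: uS (uT u) => k _; exact: pe0.
rewrite peD pe_mulX peC gU_G IH -GZ -GD; congr G; apply: funext => k.
by rewrite peD pe_mulX peC.
Qed.

Lemma pe_gU_iota (p : {poly K}) w : pe gU p (iotaU w) = iotaU (pe g p w).
Proof. by rewrite /iotaU pe_gU. Qed.

Lemma gU_ker (p q : {poly K}) :
  (forall w, pe g p w = 0 -> pe g q w = 0) ->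
  forall w', pe gU p w' = 0 -> pe gU q w' = 0.
Proof.
move=> h w'; have [x ->] := Gsurj w'; rewrite !pe_gU !G0; apply: uS => k; exact: h.
Qed.

Lemma gU_notim (p : {poly K}) w0 :
  (~ exists y, w0 = pe g p y) -> ~ exists y', iotaU w0 = pe gU p y'.
Proof.
move=> hn [y']; have [x ->] := Gsurj y'; rewrite pe_gU => /Geq /U_ex [k hk].
by apply: hn; exists (x k).
Qed.

Variables (phi : W -> W) (w0 : W).
Hypotheses (pD : forall a b, phi (a + b) = phi a + phi b)
  (pZ : forall (c : K) a, phi (c *: a) = c *: phi a)
  (hind : forall Q, pe phi Q w0 = 0 -> Q = 0).

Definition eps (P : {poly K}) : W' := G (fun k => pe phi (P * 'X^k) w0).

Lemma epsD P Q : eps (P + Q) = eps P + eps Q.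
Proof. by rewrite /eps -GD; congr G; apply: funext => k; rewrite mulrDl peD. Qed.

Lemma epsZ (c : K) P : eps (c *: P) = c *: eps P.
Proof. by rewrite /eps -GZ; congr G; apply: funext => k; rewrite -scalerAl peZ. Qed.

Lemma eps_indep w P : iotaU w = eps P -> P = 0.
Proof.
move=> /Geq /U_two [k1 [k2 [h1 h2 hlt]]].
have : pe phi (P * 'X^k1 - P * 'X^k2) w0 = 0 by rewrite peB -h1 -h2 subrr.
move/hind/eqP; rewrite subr_eq0 => /eqP e.
apply/eqP; apply: contraT => Pn0.
have := congr1 (fun p : {poly K} => size p) e; rewrite /= !size_mulXn // => /eqP; rewrite eqn_add2r.
by move/eqP => e12; rewrite e12 ltnn in hlt.
Qed.

End ModUP.

Import GRing.Theory.
Local Open Scope ring_scope.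

Section Compl.
Variables (K : fieldType) (V : lmodType K) (A : V -> Prop) (eps : {poly K} -> V).
Hypotheses (epsD : forall P Q, eps (P + Q) = eps P + eps Q)
  (epsZ : forall (c : K) P, eps (c *: P) = c *: eps P)
  (A0 : A 0) (AD : forall a b, A a -> A b -> A (a + b))
  (AZ : forall (c : K) a, A a -> A (c *: a))
  (Aind : forall a P, A a -> a = eps P -> P = 0).

Definition Pgood (X : V -> Prop) :=
  [/\ X 0, (forall a b, X a -> X b -> X (a + b)), (forall (c : K) a, X a -> X (c *: a)),
      (forall a, A a -> X a) & (forall x P, X x -> x = eps P -> P = 0)].

Lemma complement_exists : exists B : V -> Prop,
  Pgood B /\ (forall x, exists b P, B b /\ x = b + eps P).
Proof.
pose T := {X : V -> Prop | Pgood X}.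
pose R (X Y : T) : bool := `[< forall x, sval X x -> sval Y x >].
have gA : Pgood A by split.
have [t tmax] : exists t : T, forall s, R t s -> s = t.
  apply: (@Zorn T R).
  - by move=> t; apply/asboolP.
  - by move=> r s t /asboolP h1 /asboolP h2; apply/asboolP => x /h1 /h2.
  - move=> [s hs] [t ht] /asboolP h1 /asboolP h2; apply: eq_exist.
    by apply: funext => x; apply: propext; split; [apply: h1|apply: h2].
  move=> Ch htot.
  have [[s0 hs0]|ne] := pselect (exists s, Ch s); last first.
    exists (exist _ A gA) => s hs; case: ne; by exists s.
  pose Y := fun x => exists s, Ch s /\ sval s x.
  have gY : Pgood Y.
    split.
    - by exists s0; split => //; case: (svalP s0).
    - move=> a b [s [hs ha]] [t [ht hb]].
      case: (htot s t hs ht) => /asboolP hst.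
        exists t; split => //; case: (svalP t) => _ hD _ _ _; apply: hD => //; exact: hst.
      exists s; split => //; case: (svalP s) => _ hD _ _ _; apply: hD => //; exact: hst.
    - move=> c a [s [hs ha]]; exists s; split => //; case: (svalP s) => _ _ hZ _ _; exact: hZ.
    - move=> a ha; exists s0; split => //; case: (svalP s0) => _ _ _ hA _; exact: hA.
    - move=> x P [s [hs hx]]; case: (svalP s) => _ _ _ _ hI; exact: hI.
  exists (exist _ Y gY) => s hs; apply/asboolP => x hx; by exists s.
exists (sval t); split; first exact: (svalP t).
move=> x; apply: contrapT => hx.
have [t0 tD tZ tA tI] := svalP t.
pose Y := fun y => exists b c, sval t b /\ y = b + c *: x.
have gY : Pgood Y.
  split.
  - by exists 0, 0; rewrite scale0r addr0.
  - move=> a b [b1 [c1 [h1 ->]]] [b2 [c2 [h2 ->]]].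
    exists (b1 + b2), (c1 + c2); split; first exact: tD.
    by rewrite scalerDl addrACA.
  - move=> c a [b1 [c1 [h1 ->]]]; exists (c *: b1), (c * c1); split; first exact: tZ.
    by rewrite scalerDr scalerA.
  - by move=> a ha; exists a, 0; split; [exact: tA|rewrite scale0r addr0].
  - move=> y P [b [c [hb ->]]] he.
    have [c0|cn0] := eqVneq c 0.
      by apply: (tI b) => //; move: he; rewrite c0 scale0r addr0.
    exfalso; apply: hx; exists (- (c^-1 *: b)), (c^-1 *: P); split.
      by rewrite -scaleN1r; apply: (tZ); apply: (tZ).
    rewrite epsZ -he scalerDr scalerA mulVf // scale1r.
    by rewrite addrA addNr add0r.
have Rt : R t (exist _ Y gY).
  by apply/asboolP => b hb; exists b, 0; split => //; rewrite scale0r addr0.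
have eY := tmax _ Rt.
have hxY : Y x by exists 0, 1; split => //; rewrite scale1r add0r.
have hxt : sval t x by rewrite -eY.
apply: hx; exists x, 0; split => //.
by have := epsZ 0 0; rewrite !scale0r => ->; rewrite addr0.
Qed.
End Compl.

Import GRing.Theory.
Local Open Scope ring_scope.

Section Push.
Variables (K : fieldType) (V : lmodType K) (gU : V -> V).
Hypotheses (gUD : forall a b, gU (a + b) = gU a + gU b)
  (gUZ : forall (c : K) a, gU (c *: a) = c *: gU a).
Variables (B : V -> Prop) (eps : {poly K} -> V).
Hypotheses (epsD : forall P Q, eps (P + Q) = eps P + eps Q)
  (epsZ : forall (c : K) P, eps (c *: P) = c *: eps P)
  (B0 : B 0) (BD : forall a b, B a -> B b -> B (a + b))
  (BZ : forall (c : K) a, B a -> B (c *: a))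
  (Bind : forall x P, B x -> x = eps P -> P = 0)
  (Bdec : forall x, exists b P, B b /\ x = b + eps P).
Variables (f : {poly K}) (n : nat) (u0 w0 : V).
Hypotheses (fmon : f \is monic) (firr : irreducible_poly f)
  (hw0 : pe gU (f ^+ n) u0 = w0) (hnot : ~ exists y, w0 = pe gU (f ^+ n.+1) y)
  (hw0B : B w0).
Variables (Pc : {poly K} -> nat -> Prop).
Hypotheses (hPc : forall h c, Pc h c -> h \is monic /\ irreducible_poly h)
  (hPf : forall c, Pc f c -> c = n)
  (hker : forall h c, Pc h c -> forall w, pe gU (h ^+ c.+1) w = 0 -> pe gU (h ^+ c) w = 0).

Lemma eps0 : eps 0 = 0.
Proof. by have := epsZ 0 0; rewrite !scale0r. Qed.
Lemma epsN P : eps (- P) = - eps P.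
Proof. have -> : - P = (-1 : K) *: P by rewrite scaleN1r. by rewrite epsZ scaleN1r. Qed.
Lemma epsB P Q : eps (P - Q) = eps P - eps Q.
Proof. by rewrite epsD epsN. Qed.

Lemma fn0 : f != 0. Proof. exact: monic_neq0. Qed.
Lemma sizef : (1 < size f)%N. Proof. by case: firr. Qed.

Lemma dec_uniq b b' P P' : B b -> B b' -> b + eps P = b' + eps P' -> b = b' /\ P = P'.
Proof.
move=> hb hb' e.
have e2 : b - b' = eps (P' - P).
  have -> : b = b' + eps P' - eps P by rewrite -e addrK.
  by rewrite epsB [b' + _]addrC addrAC addrK.
have hb2 : B (b - b') by rewrite -scaleN1r; apply: BD => //; exact: BZ.
have := Bind hb2 e2; move/eqP; rewrite subr_eq0 => /eqP PP.
split => //; move: e2; rewrite PP subrr eps0 => /eqP; by rewrite subr_eq0 => /eqP.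
Qed.

Definition beta (x : V) : V := sval (cid (Bdec x)).
Definition piP (x : V) : {poly K} := sval (cid (svalP (cid (Bdec x)))).

Lemma decP x : B (beta x) /\ x = beta x + eps (piP x).
Proof. rewrite /beta /piP; case: cid => b /= hb; case: cid => P /= [] //. Qed.

Lemma beta_sum b P : B b -> beta (b + eps P) = b /\ piP (b + eps P) = P.
Proof.
move=> hb; have [h1 h2] := decP (b + eps P).
have [] := dec_uniq h1 hb (esym h2) => -> ->; done.
Qed.

Lemma betaD x y : beta (x + y) = beta x + beta y /\ piP (x + y) = piP x + piP y.
Proof.
have [hx ex] := decP x; have [hy ey] := decP y.
have -> : x + y = (beta x + beta y) + eps (piP x + piP y).
  by rewrite epsD addrACA -ex -ey.
by apply: beta_sum; exact: BD.
Qed.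

Lemma betaZ (c : K) x : beta (c *: x) = c *: beta x /\ piP (c *: x) = c *: piP x.
Proof.
have [hx ex] := decP x.
have -> : c *: x = (c *: beta x) + eps (c *: piP x) by rewrite epsZ -scalerDr -ex.
by apply: beta_sum; exact: BZ.
Qed.

Lemma beta0 : beta 0 = 0 /\ piP 0 = 0.
Proof. have := beta_sum 0 B0; by rewrite eps0 addr0. Qed.

Lemma betaB b : B b -> beta b = b /\ piP b = 0.
Proof. move=> hb; have := beta_sum 0 hb; by rewrite eps0 addr0. Qed.

Let d := (size f).-1.
Lemma sizeXd : size ('X^d : {poly K}) = size f.
Proof. rewrite size_polyXn /d prednK //; exact: ltn_trans sizef. Qed.
Lemma Xdn0 : ('X^d : {poly K}) != 0. Proof. exact: monic_neq0 (monicXn _ _). Qed.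

Definition red (s : {poly K}) := (size s < size f)%N.

Definition act1 p a s := pe gU p a + pe gU ((p * s) %/ f) u0.
Definition act2 (p s : {poly K}) := (p * s) %% f.
Definition Phi0 a s := beta a + eps (piP a * 'X^d + s).
Definition Pinv1 w := beta w + eps (piP w %/ 'X^d).
Definition Pinv2 w := piP w %% 'X^d.
Definition g' w := Phi0 (act1 'X (Pinv1 w) (Pinv2 w)) (act2 'X (Pinv2 w)).

Lemma red_act2 p s : red (act2 p s).
Proof. by rewrite /red /act2 ltn_modp fn0. Qed.
Lemma red_Pinv2 w : red (Pinv2 w).
Proof. by rewrite /red /Pinv2 -sizeXd ltn_modp Xdn0. Qed.

Lemma Pinv_Phi0 a s : red s -> Pinv1 (Phi0 a s) = a /\ Pinv2 (Phi0 a s) = s.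
Proof.
move=> hs; have [ha ea] := decP a.
have [e1 e2] := beta_sum (piP a * 'X^d + s) ha.
rewrite /Pinv1 /Pinv2 /Phi0 e1 e2.
have hs' : (size s < size ('X^d : {poly K}))%N by rewrite sizeXd.
rewrite divpD mulpK ?Xdn0 // divp_small // addr0 -ea; split => //.
by rewrite modpD modp_mull add0r modp_small.
Qed.

Lemma Phi0_Pinv w : Phi0 (Pinv1 w) (Pinv2 w) = w.
Proof.
have [hw ew] := decP w.
have [e1 e2] := beta_sum (piP w %/ 'X^d) hw.
by rewrite /Phi0 /Pinv1 /Pinv2 e1 e2 -divp_eq -ew.
Qed.

Lemma Phi0D a b s t : Phi0 (a + b) (s + t) = Phi0 a s + Phi0 b t.
Proof.
have [e1 e2] := betaD a b.
by rewrite /Phi0 e1 e2 mulrDl addrACA epsD addrACA.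
Qed.

Lemma Phi0Z (c : K) a s : Phi0 (c *: a) (c *: s) = c *: Phi0 a s.
Proof.
have [e1 e2] := betaZ c a.
by rewrite /Phi0 e1 e2 -scalerAl -scalerDr epsZ scalerDr.
Qed.

Lemma Phi0_00 : Phi0 0 0 = 0.
Proof. have [e1 e2] := beta0. by rewrite /Phi0 e1 e2 mul0r addr0 eps0 addr0. Qed.

Lemma Phi0_eq0 a s : red s -> Phi0 a s = 0 -> a = 0 /\ s = 0.
Proof.
move=> hs e; have [h1 h2] := Pinv_Phi0 a hs; rewrite e in h1 h2.
have [b0 p0] := beta0.
by rewrite /Pinv1 /Pinv2 b0 p0 div0p eps0 addr0 mod0p in h1 h2.
Qed.

Lemma act_comp p q a s :
  act1 p (act1 q a s) (act2 q s) = act1 (p * q) a s /\ act2 p (act2 q s) = act2 (p * q) s.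
Proof.
split; last by rewrite /act2 modp_mul mulrA.
rewrite /act1 /act2 pe_wD // !pe_mul // -addrA; congr (_ + _).
rewrite -pe_mul // -peD; congr (pe gU _ u0).
by rewrite -mulrA [in RHS](divp_eq (q * s) f) mulrDr mulrA divpD mulpK ?fn0.
Qed.

Lemma actD p q a s :
  act1 (p + q) a s = act1 p a s + act1 q a s /\ act2 (p + q) s = act2 p s + act2 q s.
Proof.
split; last by rewrite /act2 mulrDl modpD.
by rewrite /act1 peD mulrDl divpD peD addrACA.
Qed.

Lemma actLD p a b s t :
  act1 p (a + b) (s + t) = act1 p a s + act1 p b t /\ act2 p (s + t) = act2 p s + act2 p t.
Proof.
split; last by rewrite /act2 mulrDr modpD.
by rewrite /act1 pe_wD // mulrDr divpD peD addrACA.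
Qed.

Lemma actLZ p (c : K) a s :
  act1 p (c *: a) (c *: s) = c *: act1 p a s /\ act2 p (c *: s) = c *: act2 p s.
Proof.
split; last by rewrite /act2 -scalerAr modpZl.
by rewrite /act1 pe_wZ // -scalerAr divpZl peZ scalerDr.
Qed.

Lemma actC (c : K) a s : red s -> act1 c%:P a s = c *: a /\ act2 c%:P s = c *: s.
Proof.
move=> hs; rewrite /act1 /act2 mul_polyC.
split; last by rewrite modpZl modp_small.
by rewrite peC divpZl divp_small // scaler0 pe0 addr0.
Qed.

Lemma act0 a s : act1 0 a s = 0 /\ act2 0 s = 0.
Proof. by rewrite /act1 /act2 mul0r div0p mod0p !pe0 addr0. Qed.

Lemma pe_g' p w : pe g' p w = Phi0 (act1 p (Pinv1 w) (Pinv2 w)) (act2 p (Pinv2 w)).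
Proof.
elim/poly_ind: p w => [|p c IH] w.
  by have [-> ->] := act0 (Pinv1 w) (Pinv2 w); rewrite pe0 Phi0_00.
rewrite peD pe_mulX peC IH.
have [-> ->] := Pinv_Phi0 (act1 'X (Pinv1 w) (Pinv2 w)) (red_act2 'X (Pinv2 w)).
have [h1 h2] := act_comp p 'X (Pinv1 w) (Pinv2 w).
rewrite h1 h2.
have [h3 h4] := actD (p * 'X) c%:P (Pinv1 w) (Pinv2 w).
rewrite h3 h4 Phi0D.
have [h5 h6] := actC c (Pinv1 w) (red_Pinv2 w).
by rewrite h5 h6 Phi0Z Phi0_Pinv.
Qed.

Lemma g'_ker p w : pe g' p w = 0 <-> act1 p (Pinv1 w) (Pinv2 w) = 0 /\ act2 p (Pinv2 w) = 0.
Proof.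
rewrite pe_g'; split; first by apply: Phi0_eq0; exact: red_act2.
by case=> -> ->; exact: Phi0_00.
Qed.

Lemma Pinv1D x y : Pinv1 (x + y) = Pinv1 x + Pinv1 y /\ Pinv2 (x + y) = Pinv2 x + Pinv2 y.
Proof.
have [e1 e2] := betaD x y.
by rewrite /Pinv1 /Pinv2 e1 e2 divpD modpD epsD addrACA.
Qed.

Lemma Pinv1Z (c : K) x : Pinv1 (c *: x) = c *: Pinv1 x /\ Pinv2 (c *: x) = c *: Pinv2 x.
Proof.
have [e1 e2] := betaZ c x.
by rewrite /Pinv1 /Pinv2 e1 e2 divpZl modpZl epsZ scalerDr.
Qed.

Lemma g'D x y : g' (x + y) = g' x + g' y.
Proof.
rewrite /g'; have [-> ->] := Pinv1D x y.
have [-> ->] := actLD 'X (Pinv1 x) (Pinv1 y) (Pinv2 x) (Pinv2 y).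
exact: Phi0D.
Qed.

Lemma g'Z (c : K) x : g' (c *: x) = c *: g' x.
Proof.
rewrite /g'; have [-> ->] := Pinv1Z c x.
have [-> ->] := actLZ 'X c (Pinv1 x) (Pinv2 x).
exact: Phi0Z.
Qed.

Lemma g'_ext b : B b -> B (gU b) -> g' b = gU b.
Proof.
move=> hb hgb; have [e1 e2] := betaB hb.
rewrite /g' /Pinv1 /Pinv2 e1 e2 div0p mod0p eps0 addr0.
rewrite /act1 /act2 mulr0 div0p mod0p pe0 addr0 pe_X.
have [e3 e4] := betaB hgb.
by rewrite /Phi0 e3 e4 mul0r addr0 eps0 addr0.
Qed.

Lemma g'_witness : exists e, pe g' (f ^+ n.+1) e = w0.
Proof.
have h1 : red 1 by rewrite /red size_poly1 sizef.
exists (Phi0 0 1); rewrite pe_g'.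
have [-> ->] := Pinv_Phi0 0 h1.
rewrite /act1 /act2 mulr1 pe_w0 // add0r exprSr mulpK ?fn0 // modp_mull hw0.
have [e3 e4] := betaB hw0B.
by rewrite /Phi0 e3 e4 mul0r addr0 eps0 addr0.
Qed.

Lemma g'_cfin h c : Pc h c -> forall w, pe g' (h ^+ c.+1) w = 0 -> pe g' (h ^+ c) w = 0.
Proof.
move=> hP w /g'_ker [k1 k2]; apply/g'_ker.
set a := Pinv1 w in k1 *; set s := Pinv2 w in k1 k2 *.
have hs : red s by exact: red_Pinv2.
have s0 : s = 0.
  apply/eqP; apply: contraT => sn0.
  have nfs : ~~ (f %| s).
    apply/negP => /(dvdp_leq sn0) hle; move: hs; by rewrite /red ltnNge hle.
  have cop : coprimep f s by rewrite irreducible_poly_coprime.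
  have [hmon hirr] := hPc hP.
  have [hf|hnf] := eqVneq h f.
    subst h; have cn := hPf hP; subst c; exfalso.
    move: k1; rewrite /act1.
    have -> : (f ^+ n.+1 * s) %/ f = f ^+ n * s by rewrite exprSr -mulrA [f * s]mulrC mulrA mulpK ?fn0.
    rewrite [f ^+ n * s]mulrC pe_mul // hw0 => k1.
    have cop2 : coprimep s (f ^+ n.+1) by rewrite coprimep_sym; apply: coprimep_expl.
    have [[A1 B1] /= hAB] := Bezout_eq1_coprimepP _ _ cop2.
    apply: hnot; exists (pe gU B1 w0 - pe gU A1 a).
    have e1 : pe gU s w0 = - pe gU (f ^+ n.+1) a.
      by apply/eqP; rewrite -addr_eq0 addrC k1.
    rewrite pe_wB // -!pe_mul // [f ^+ n.+1 * B1]mulrC [f ^+ n.+1 * A1]mulrC.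
    rewrite -{1}(pe1 gU w0) -hAB peD pe_mul // e1 pe_wN // -pe_mul //.
    by rewrite addrC.
  have hnf' : coprimep f h.
    rewrite irreducible_poly_coprime //; apply/negP => hfh.
    have sf1 : size f != 1 by rewrite neq_ltn sizef orbT.
    have := (snd hirr) f sf1 hfh.
    rewrite eqp_monic // => /eqP efh; by rewrite efh eqxx in hnf.
  have hd : f %| h ^+ c.+1 * s by apply/modp_eq0P; exact: k2.
  by rewrite (Gauss_dvdpr s (coprimep_expr c.+1 hnf')) (negbTE nfs) in hd.
rewrite s0 /act1 /act2 mulr0 div0p mod0p pe0 addr0; split => //.
move: k1; rewrite s0 /act1 mulr0 div0p pe0 addr0; exact: hker.
Qed.

Lemma push_main : exists g2 : V -> V,
  [/\ (forall a b, g2 (a + b) = g2 a + g2 b), (forall (c : K) a, g2 (c *: a) = c *: g2 a),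
      (forall b, B b -> B (gU b) -> g2 b = gU b),
      (forall h c, Pc h c -> forall w, pe g2 (h ^+ c.+1) w = 0 -> pe g2 (h ^+ c) w = 0) &
      exists e, pe g2 (f ^+ n.+1) e = w0].
Proof.
exists g'; split.
- exact: g'D.
- exact: g'Z.
- exact: g'_ext.
- exact: g'_cfin.
- exact: g'_witness.
Qed.

End Push.

Import GRing.Theory.
Local Open Scope ring_scope.

Unset Implicit Arguments.
Theorem lemma3p11
  (S : signature) (K : fieldType) (T : theory S) (D : vs_formulas S K)
  (hT : model_complete T) (hD : defines_vs_in D T)
  (C : kconf K) (hC : transcendental C)
  (M : structure S) (theta : M -> M) (hM : model_TthetaC D T C theta)
  (f : {poly K}) (hf : monic_irr f) (n : nat) (hn : kc C f = Some n)
  (v : M)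
  (hv1 : inIm D theta (f ^+ n) v) (hv2 : ~ inIm D theta (f ^+ n.+1) v) :
  exists (M' : structure S) (theta' : M' -> M') (e : M -> M'),
    [/\ embedding e,
        (forall x : M, e (theta x) = theta' (e x)),
        model_TthetaC D T C theta' &
        inIm D theta' (f ^+ n.+1) (e v)].
Proof.
have [u _] := ultra_exists.
case: hM => [[hMT hlin] hCe].
have [W [i [Hi HV HA HS _]]] := hD M hMT.
have [g [hth gD gZ hout]] := g_of_theta Hi HV HA HS hlin.
pose M' := UPs u M.
have hM'T : model T M' := @model_UP S u M T hMT.
have [W' [i' [Hi' HV' HA' HS' _]]] := hD M' hM'T.
have exG : forall x : nat -> W, exists w', (cl u (fun k => i (x k)) : M') = i' w'.
  move=> x; apply/HV'; rewrite /inV los1; apply: uS (uT u) => k _; apply/HV; by exists (x k).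
pose G x := sval (cid (exG x)).
have hG : forall x, i' (G x) = cl u (fun k => i (x k)).
  by move=> x; rewrite /G; case: cid.
have GD : forall x y, G (fun k => x k + y k) = G x + G y.
  move=> x y.
  have : addR D (i' (G x)) (i' (G y)) (i' (G (fun k => x k + y k))).
    rewrite !hG /addR los3; apply: uS (uT u) => k _; apply/HA; by exists (x k), (y k).
  by move/HA' => [a [b [/Hi' -> /Hi' -> /Hi' ->]]].
have GZ : forall (c : K) x, G (fun k => c *: x k) = c *: G x.
  move=> c x.
  have : smulR D c (i' (G x)) (i' (G (fun k => c *: x k))).
    rewrite !hG /smulR los2; apply: uS (uT u) => k _; apply/HS; by exists (x k).
  by move/HS' => [a [/Hi' -> /Hi' ->]].
have Gz : G (fun _ => 0) = 0.
  have e : (fun _ : nat => (0 : W)) = (fun k => (0 : K) *: (fun _ => (0 : W)) k).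
    by apply: funext => k; rewrite scale0r.
  by rewrite e GZ scale0r.
have G0 : forall x, G x = 0 <-> U u (fun k => x k = 0).
  move=> x; rewrite -Gz; split.
    move/(congr1 i'); rewrite !hG => /cl_eq; apply: uS => k /Hi //.
  move=> h; apply: Hi'; rewrite !hG; apply/cl_eq; apply: uS h => k -> //.
have Gsurj : forall w', exists x, w' = G x.
  move=> w'.
  have hv : inV D (i' w') by apply/HV'; exists w'.
  move: hv; rewrite -[i' w']cl_val /inV los1 => hv.
  pose x k := match pselect (exists w, sval (i' w') k = i w) with
              | left h => sval (cid h) | right _ => 0 end.
  exists x; apply: Hi'; rewrite hG -[i' w']cl_val; apply/cl_eq.
  apply: uS hv => k /HV hk; rewrite /x; case: pselect => [h|//].
  by case: cid.
have Cg : forall h c, monic_irr h -> kc C h = Some c ->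
    forall w, pe g (h ^+ c.+1) w = 0 -> pe g (h ^+ c) w = 0.
  move=> h c hh hc w hw.
  have : inKer D theta (h ^+ c.+1) (i w) by apply/(inKer_iff Hi HV HA HS hth gD gZ); exists w.
  move/(hCe h c hh hc)/(inKer_iff Hi HV HA HS hth gD gZ) => [w1 [/Hi <- //]].
have [u0 ev] : exists u0, v = i (pe g (f ^+ n) u0).
  by apply/(inIm_iff Hi HV HA HS hth gD gZ).
pose w0 := pe g (f ^+ n) u0.
have hnot : ~ exists y, w0 = pe g (f ^+ n.+1) y.
  move=> [y hy]; apply: hv2; apply/(inIm_iff Hi HV HA HS hth gD gZ); exists y.
  by rewrite ev -hy.
pose phi := pe g f.
have pD : forall a b, phi (a + b) = phi a + phi b by move=> a b; exact: pe_wD.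
have pZ : forall (c : K) a, phi (c *: a) = c *: phi a by move=> c a; exact: pe_wZ.
have hind : forall Q, pe phi Q w0 = 0 -> Q = 0.
  move=> Q; apply: (orbit_indep pD pZ (m := n) (u0 := u0)).
  - by rewrite /w0 pe_exp.
  - by move=> [y hy]; apply: hnot; exists y; rewrite hy pe_exp.
  - by move=> w; rewrite -!pe_exp //; exact: Cg.
pose gu := gU Gsurj g.
pose io := iotaU G.
pose ep := eps G phi w0.
have guD : forall a b, gu (a + b) = gu a + gu b by move=> a b; apply: (gUD GD GZ Gsurj G0).
have guZ : forall (c : K) a, gu (c *: a) = c *: gu a by move=> c a; apply: (gUZ GD GZ Gsurj G0).
have epD : forall P Q, ep (P + Q) = ep P + ep Q by move=> P Q; apply: (epsD GD).
have epZ : forall (c : K) P, ep (c *: P) = c *: ep P by move=> c P; apply: (epsZ GZ).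
have ioD : forall a b, io (a + b) = io a + io b by move=> a b; rewrite /io /iotaU -GD.
have ioZ : forall (c : K) a, io (c *: a) = c *: io a by move=> c a; rewrite /io /iotaU -GZ.
have io0 : io 0 = 0 by exact: Gz.
have ioind : forall a P, (exists w, a = io w) -> a = ep P -> P = 0.
  move=> a P [w ->]; exact: (eps_indep GD GZ G0 hind).
have [B [[B0 BD BZ BA Bind] Bdec]] := complement_exists epZ (A := fun a => exists w, a = io w)
   (ex_intro _ 0 (esym io0))
   (fun a b ha hb => match ha, hb with ex_intro w1 e1, ex_intro w2 e2 =>
        ex_intro _ (w1 + w2) (etrans (f_equal2 +%R e1 e2) (esym (ioD w1 w2))) end)
   (fun c a ha => match ha with ex_intro w1 e1 =>
        ex_intro _ (c *: w1) (etrans (f_equal (fun z => c *: z) e1) (esym (ioZ c w1))) end)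
   ioind.
have [fmon firr] := hf.
have hw0' : pe gu (f ^+ n) (io u0) = io w0 by exact: (pe_gU_iota GD GZ Gsurj G0 g).
have hnot' : ~ exists y, io w0 = pe gu (f ^+ n.+1) y.
  exact: (@gU_notim u K W W' G GD GZ Gsurj G0 g _ _ hnot).
have hw0B : B (io w0) by apply: BA; exists w0.
have [g2 [g2D g2Z g2ext g2cf [e2 he2]]] :=
  @push_main K W' gu guD guZ B ep epD epZ B0 BD BZ Bind Bdec f n (io u0) (io w0)
    fmon firr hw0' hnot' hw0B (fun h c => monic_irr h /\ kc C h = Some c)
    (fun h c hc => proj1 hc)
    (fun c hc => esym (Some_inj (etrans (esym hn) (proj2 hc))))
    (fun h c hc => gU_ker GD GZ G0 (Cg h c (proj1 hc) (proj2 hc))).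
pose th' := thetaOf i' g2.
have hth' : forall w, th' (i' w) = i' (g2 w) by move=> w; exact: (thetaOf_i Hi').
have hdiag : forall w, (diag u (i w) : M') = i' (io w) by move=> w; rewrite /io /iotaU hG.
exists M', th', (@diag S u M); split.
- exact: diag_embedding.
- move=> x; have [[w ->]|nx] := pselect (exists w, x = i w).
    rewrite hth hdiag hdiag hth' g2ext; first by rewrite /gu (gU_iota GD GZ Gsurj G0 g).
      by apply: BA; exists w.
    by rewrite /gu (gU_iota GD GZ Gsurj G0 g); apply: BA; exists (g w).
  have hx : ~ inV D x by move/HV.
  rewrite hout // /th' (thetaOf_out HV' g2) ?hdiag ?io0 //.
  rewrite /inV los1 => /U_ex [k]; exact: hx.
- split; first by split; [exact: hM'T | exact: (thetaOf_lin Hi' HV' HA' HS' g2D g2Z)].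
  move=> h c hh hc y.
  rewrite (inKer_iff Hi' HV' HA' HS' hth' g2D g2Z) (inKer_iff Hi' HV' HA' HS' hth' g2D g2Z).
  split => -[w [-> hw]]; exists w; split => //.
    by rewrite exprS pe_mul // hw pe_w0.
  exact: (g2cf h c (conj hh hc)).
- apply/(inIm_iff Hi' HV' HA' HS' hth' g2D g2Z); exists e2.
  by rewrite ev hdiag he2.
Qed.
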